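(* Let $n\ge2$, $Q>0$ real, and let $P\in\mathrm{Mat}(n^2,\mathbb{C})$ be a nontrivial solution of rank $r$ to $$P^*=P,\quad P^2=P,\quad Q^2(P_1P_2P_1-P_2P_1P_2)=P_1-P_2,$$ where $P_1=P\otimes I_n$, $P_2=I_n\otimes P$. Let $K_P=P_1-P_2$ and $\lambda_\pm=\pm\sqrt{1-Q^{-2}}$. Then the eigenvalues $\lambda_+$ and $\lambda_-$ of $K_P$ have the same multiplicity $k$, and $$\frac{1}{2n}\,r(n^2-r)\le k\le \min(rn,\;n^3-rn).$$
   Context: $I_n$ is the $n\times n$ identity matrix and $\otimes$ is the Kronecker product. A solution is trivial if $P=0$ or $P=I_n\otimes I_n$, nontrivial otherwise. *)

(* Defs.v *)
From mathcomp Require Import all_boot all_order all_algebra.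
From mathcomp Require Import algC.
From mathcomp.real_closed Require Export mxtens.
Set Implicit Arguments. Unset Strict Implicit. Unset Printing Implicit Defensive.
Import Order.TTheory GRing.Theory Num.Theory.
Local Open Scope ring_scope.

Definition adjmx {m n : nat} (A : 'M[algC]_(m, n)) : 'M[algC]_(n, m) :=
  (map_mx (@Num.conj_op _) A)^T.

Definition eig_mult {N : nat} (A : 'M[algC]_N) (a : algC) : nat :=
  mup a (char_poly A).

(* Main.v *)
Require Import Defs.
From mathcomp Require Import all_boot all_order all_algebra.
From mathcomp Require Import algC ring sesquilinear spectral.
From mathcomp.real_closed Require Import mxtens.
Set Implicit Arguments. Unset Strict Implicit. Unset Printing Implicit Defensive.
Import Order.TTheory GRing.Theory Num.Theory.
Local Open Scope ring_scope.

Lemma adjmxE m n (A : 'M[algC]_(m, n)) i j : adjmx A i j = (A j i)^*.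
Proof. by rewrite /adjmx !mxE. Qed.

Lemma adjmxK m n (A : 'M[algC]_(m, n)) : adjmx (adjmx A) = A.
Proof. by apply/matrixP => i j; rewrite !adjmxE conjCK. Qed.

Lemma adjmxD m n (A B : 'M[algC]_(m, n)) : adjmx (A + B) = adjmx A + adjmx B.
Proof. by apply/matrixP => i j; rewrite [RHS]mxE !adjmxE mxE rmorphD. Qed.

Lemma adjmxN m n (A : 'M[algC]_(m, n)) : adjmx (- A) = - adjmx A.
Proof. by apply/matrixP => i j; rewrite [RHS]mxE !adjmxE mxE rmorphN. Qed.

Lemma adjmxB m n (A B : 'M[algC]_(m, n)) : adjmx (A - B) = adjmx A - adjmx B.
Proof. by rewrite adjmxD adjmxN. Qed.

Lemma adjmxZ m n a (A : 'M[algC]_(m, n)) : adjmx (a *: A) = a^* *: adjmx A.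
Proof. by apply/matrixP => i j; rewrite [RHS]mxE !adjmxE mxE rmorphM. Qed.

Lemma adjmxM m n p (A : 'M[algC]_(m, n)) (B : 'M[algC]_(n, p)) :
  adjmx (A *m B) = adjmx B *m adjmx A.
Proof.
apply/matrixP => i j; rewrite !mxE rmorph_sum; apply: eq_bigr => k _.
by rewrite !adjmxE rmorphM mulrC.
Qed.

Lemma adjmx1 n : adjmx (1%:M : 'M[algC]_n) = 1%:M.
Proof. by apply/matrixP => i j; rewrite adjmxE !mxE eq_sym rmorph_nat. Qed.

Lemma adjmx_tens m n p q (A : 'M[algC]_(m, n)) (B : 'M[algC]_(p, q)) :
  adjmx (A *t B) = adjmx A *t adjmx B.
Proof.
apply/matrixP => i j; rewrite adjmxE.
case: (mxtens_indexP i) => i1 i2; case: (mxtens_indexP j) => j1 j2.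
by rewrite !tensmxE rmorphM !adjmxE.
Qed.

Lemma adjmx_cast m m' (e : m = m') (A : 'M[algC]_m) :
  adjmx (castmx (e, e) A) = castmx (e, e) (adjmx A).
Proof. by case: m' / e; rewrite !castmx_id. Qed.

Lemma trace_cast m m' (e : m = m') (A : 'M[algC]_m) :
  \tr (castmx (e, e) A) = \tr A.
Proof. by case: m' / e; rewrite castmx_id. Qed.

Lemma trace_adj_sum m n (A : 'M[algC]_(m, n)) :
  \tr (A *m adjmx A) = \sum_i \sum_j `|A i j| ^+ 2.
Proof.
rewrite /mxtrace; apply: eq_bigr => i _; rewrite mxE; apply: eq_bigr => j _.
by rewrite adjmxE normCK.
Qed.

Lemma trace_adj_ge0 m n (A : 'M[algC]_(m, n)) : 0 <= \tr (A *m adjmx A).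
Proof.
by rewrite trace_adj_sum; apply: sumr_ge0 => i _; apply: sumr_ge0 => j _;
  rewrite exprn_ge0.
Qed.

Lemma trace_adj_eq0 m n (A : 'M[algC]_(m, n)) : \tr (A *m adjmx A) = 0 -> A = 0.
Proof.
rewrite trace_adj_sum => /eqP; rewrite psumr_eq0; last first.
  by move=> i _; apply: sumr_ge0 => j _; rewrite exprn_ge0.
move=> /allP H; apply/matrixP => i j; rewrite mxE.
have /H /implyP /(_ isT) := mem_index_enum i.
rewrite psumr_eq0; last by move=> k _; rewrite exprn_ge0.
move=> /allP /(_ j (mem_index_enum j)) /implyP /(_ isT).
by rewrite sqrf_eq0 normr_eq0 => /eqP.
Qed.

Lemma herm_trace_ge0 n (H : 'M[algC]_n) : adjmx H = H -> 0 <= \tr (H *m H).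
Proof. by move=> hH; rewrite -{2}hH trace_adj_ge0. Qed.

Lemma herm_trace_eq0 n (H : 'M[algC]_n) : adjmx H = H -> \tr (H *m H) = 0 -> H = 0.
Proof. by move=> hH; rewrite -{2}hH; apply: trace_adj_eq0. Qed.

Lemma sum_tens m n (F : 'I_(m * n) -> algC) :
  \sum_x F x = \sum_(i < m) \sum_(j < n) F (mxtens_index (i, j)).
Proof.
rewrite pair_big /=; apply: reindex.
exists (@mxtens_unindex m n) => x _.
  by case: x => a b; rewrite mxtens_indexK.
by rewrite -surjective_pairing mxtens_unindexK.
Qed.

Lemma trace_tens m n (A : 'M[algC]_m) (B : 'M[algC]_n) :
  \tr (A *t B) = \tr A * \tr B.
Proof. by rewrite /mxtrace mulr_sum; apply: eq_bigr => i _; rewrite mxE. Qed.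

Lemma tens11 m n : (1%:M : 'M[algC]_m) *t (1%:M : 'M[algC]_n) = 1%:M.
Proof.
apply/matrixP => i j.
case: (mxtens_indexP i) => i1 i2; case: (mxtens_indexP j) => j1 j2.
rewrite tensmxE !mxE -natrM; congr (_%:R).
by rewrite (can_eq (@mxtens_indexK _ _)) xpair_eqE mulnb.
Qed.

Lemma sum_delta n (k : 'I_n) (F : 'I_n -> algC) :
  \sum_(l < n) (k == l)%:R * F l = F k.
Proof.
rewrite (bigD1 k) //= eqxx mul1r big1 ?addr0 // => l /negbTE.
by rewrite eq_sym => ->; rewrite mul0r.
Qed.

Lemma sum_delta' n (k : 'I_n) (F : 'I_n -> algC) :
  \sum_(l < n) F l * (l == k)%:R = F k.
Proof.
rewrite -[RHS](sum_delta k); apply: eq_bigr => l _.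
by rewrite mulrC eq_sym.
Qed.

Lemma cast_tens3 n (i j k : 'I_n) :
  cast_ord (esym (mulnA n n n)) (mxtens_index (mxtens_index (i, j), k)) =
  mxtens_index (i, mxtens_index (j, k)).
Proof. by apply: val_inj => /=; rewrite mulnDl -mulnA addnA. Qed.

Lemma trace_mul_sum m (X Y : 'M[algC]_m) :
  \tr (X *m Y) = \sum_x \sum_y X x y * Y y x.
Proof. by rewrite /mxtrace; apply: eq_bigr => x _; rewrite mxE. Qed.

Lemma sum3 n (F : 'I_(n * n * n) -> algC) :
  \sum_x F x = \sum_(i < n) \sum_(j < n) \sum_(k < n)
                  F (mxtens_index (mxtens_index (i, j), k)).
Proof.
rewrite sum_tens (sum_tens (fun a => \sum_(k < n) F (mxtens_index (a, k)))).
by [].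
Qed.

Lemma collapse3 n (F : 'I_n -> 'I_n -> 'I_n -> algC) i k :
  \sum_(i' < n) \sum_(j' < n) \sum_(k' < n)
      F i' j' k' * ((k == k')%:R * (i' == i)%:R) = \sum_(j' < n) F i j' k.
Proof.
rewrite (bigD1 i) //= [X in _ + X = _]big1 ?addr0; last first.
  move=> i2 ne; apply: big1 => j2 _; apply: big1 => k2 _.
  by rewrite (negbTE ne) mulr0 mulr0.
apply: eq_bigr => j' _; rewrite eqxx -[RHS](sum_delta k).
by apply: eq_bigr => k' _; rewrite mulr1 mulrC.
Qed.

Lemma trace_mul_sum2 n (X Y : 'M[algC]_(n * n)) :
  \tr (X *m Y) = \sum_(i < n) \sum_(j < n) \sum_(i' < n) \sum_(j' < n)
    X (mxtens_index (i, j)) (mxtens_index (i', j')) *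
    Y (mxtens_index (i', j')) (mxtens_index (i, j)).
Proof.
rewrite trace_mul_sum sum_tens; do 2! (apply: eq_bigr => ? _).
by rewrite sum_tens.
Qed.

Section PT.
Variables (n : nat) (P : 'M[algC]_(n * n)).
Definition pp (i j i' j' : 'I_n) := P (mxtens_index (i, j)) (mxtens_index (i', j')).
Definition Amat : 'M[algC]_n := \matrix_(j, j') \sum_i pp i j i j'.
Definition Bmat : 'M[algC]_n := \matrix_(i, i') \sum_j pp i j i' j.

Lemma trP_pp : \tr P = \sum_i \sum_j pp i j i j.
Proof. by rewrite /mxtrace sum_tens. Qed.

Lemma trA : \tr Amat = \tr P.
Proof.
rewrite trP_pp exchange_big /mxtrace; apply: eq_bigr => j _; by rewrite mxE.
Qed.

Lemma trB : \tr Bmat = \tr P.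
Proof. rewrite trP_pp /mxtrace; apply: eq_bigr => j _; by rewrite mxE. Qed.

Lemma adjA : adjmx P = P -> adjmx Amat = Amat.
Proof.
move=> hP; apply/matrixP => j j'; rewrite adjmxE !mxE rmorph_sum.
apply: eq_bigr => i _; rewrite /pp -{2}hP adjmxE //.
Qed.

Lemma adjB : adjmx P = P -> adjmx Bmat = Bmat.
Proof.
move=> hP; apply/matrixP => j j'; rewrite adjmxE !mxE rmorph_sum.
apply: eq_bigr => i _; rewrite /pp -{2}hP adjmxE //.
Qed.

Lemma trPB : \tr (P *m (Bmat *t 1%:M)) = \tr (Bmat *m Bmat).
Proof.
rewrite trace_mul_sum2.
transitivity (\sum_i \sum_j \sum_i' \sum_j'
   (pp i j i' j' * Bmat i' i) * (j' == j)%:R).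
  do 4! (apply: eq_bigr => ? _); rewrite tensmxE !mxE /pp; ring.
rewrite trace_mul_sum; apply: eq_bigr => i _.
under eq_bigr do (under eq_bigr do rewrite sum_delta'); rewrite exchange_big.
by apply: eq_bigr => i2 _; rewrite [Bmat i i2]mxE mulr_suml.
Qed.

Lemma trPA : \tr (P *m (1%:M *t Amat)) = \tr (Amat *m Amat).
Proof.
rewrite trace_mul_sum2.
transitivity (\sum_i \sum_j \sum_j' \sum_i'
   (pp i j i' j' * Amat j' j) * (i' == i)%:R).
  do 2! (apply: eq_bigr => ? _); rewrite exchange_big.
  do 2! (apply: eq_bigr => ? _); rewrite tensmxE !mxE /pp; ring.
under eq_bigr do (under eq_bigr do (under eq_bigr do rewrite sum_delta')).
rewrite exchange_big trace_mul_sum; apply: eq_bigr => j _.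
rewrite exchange_big; apply: eq_bigr => j2 _.
by rewrite [Amat j j2]mxE mulr_suml.
Qed.
End PT.

Lemma trace_mul_sum3 n (X Y : 'M[algC]_(n * n * n)) :
  \tr (X *m Y) = \sum_(i < n) \sum_(j < n) \sum_(k < n)
    \sum_(i' < n) \sum_(j' < n) \sum_(k' < n)
    X (mxtens_index (mxtens_index (i, j), k)) (mxtens_index (mxtens_index (i', j'), k')) *
    Y (mxtens_index (mxtens_index (i', j'), k')) (mxtens_index (mxtens_index (i, j), k)).
Proof.
rewrite trace_mul_sum sum3; do 3! (apply: eq_bigr => ? _).
by rewrite sum3.
Qed.

Lemma trP1P2 n (P : 'M[algC]_(n * n)) :
  \tr ((P *t (1%:M : 'M_n)) *m castmx (mulnA n n n, mulnA n n n) ((1%:M : 'M_n) *t P))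
  = \tr (Amat P *m Bmat P).
Proof.
rewrite trace_mul_sum3.
transitivity (\sum_(i < n) \sum_(j < n) \sum_(k < n) \sum_(j' < n)
    pp P i j i j' * pp P j' k j k).
  apply: eq_bigr => i _; apply: eq_bigr => j _; apply: eq_bigr => k _.
  rewrite -(collapse3 (fun i' j' k' => pp P i j i' j' * pp P j' k' j k)); do 3! (apply: eq_bigr => ? _).
  rewrite castmxE /= !cast_tens3 !tensmxE !mxE /pp; ring.
rewrite exchange_big trace_mul_sum; apply: eq_bigr => j _.
under eq_bigr do rewrite exchange_big.
rewrite exchange_big; apply: eq_bigr => j' _.
rewrite !mxE mulr_suml; apply: eq_bigr => i _.
by rewrite mulr_sumr.
Qed.

Lemma trace_adj n (A : 'M[algC]_n) : \tr (adjmx A) = (\tr A)^*.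
Proof. by rewrite /mxtrace rmorph_sum; apply: eq_bigr => i _; rewrite adjmxE. Qed.

Lemma herm_tr_real n (A : 'M[algC]_n) : adjmx A = A -> (\tr A)^* = \tr A.
Proof. by move=> h; rewrite -trace_adj h. Qed.

Lemma trZl m (a : algC) (X Y : 'M[algC]_m) : \tr ((a *: X) *m Y) = a * \tr (X *m Y).
Proof. by rewrite -scalemxAl mxtraceZ. Qed.
Lemma trZr m (a : algC) (X Y : 'M[algC]_m) : \tr (X *m (a *: Y)) = a * \tr (X *m Y).
Proof. by rewrite -scalemxAr mxtraceZ. Qed.

Lemma trN m (A : 'M[algC]_m) : \tr (- A) = - \tr A.
Proof. exact: raddfN. Qed.
Lemma expandQ m (P X1 X2 : 'M[algC]_m) (a b c : algC) :
  let Q := a *: P - b *: X1 - b *: X2 + c *: 1%:M in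
  \tr (Q *m Q) = a * a * \tr (P *m P) + b * b * (\tr (X1 *m X1) + \tr (X2 *m X2)
     + \tr (X1 *m X2) + \tr (X2 *m X1)) + c * c * \tr (1%:M : 'M_m)
     - a * b * (\tr (P *m X1) + \tr (X1 *m P) + \tr (P *m X2) + \tr (X2 *m P))
     + 2 * a * c * \tr P - 2 * b * c * (\tr X1 + \tr X2).
Proof.
move=> Q; rewrite /Q !(mulmxDl, mulmxDr, mulNmx, mulmxN).
rewrite !(mxtraceD, trN) !(trZl, trZr) !(mulmx1, mul1mx).
ring.
Qed.

Lemma trsq n (A B : 'M[algC]_n) :
  \tr ((A - B) *m (A - B)) = \tr (A *m A) + \tr (B *m B) - \tr (A *m B) - \tr (B *m A).
Proof.
rewrite mulmxDl !mulmxDr !mulNmx !mulmxN opprK !(mxtraceD, trN).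
ring.
Qed.

Lemma key_ineq n (P : 'M[algC]_(n * n)) : (0 < n)%N ->
  adjmx P = P -> P *m P = P ->
  0 <= n%:R ^+ 2 * \tr P + \tr P ^+ 2 - 2 * n%:R * \tr (Amat P *m Bmat P).
Proof.
move=> n0 hP iP.
set A := Amat P; set B := Bmat P; set R := \tr P; set nR : algC := n%:R.
have hA : adjmx A = A by apply: adjA.
have hB : adjmx B = B by apply: adjB.
have RR : R^* = R by apply: herm_tr_real.
have nRR : nR^* = nR by rewrite /nR rmorph_nat.
set X1 : 'M[algC]_(n * n) := B *t 1%:M.
set X2 : 'M[algC]_(n * n) := 1%:M *t A.
set Q := nR ^+ 2 *: P - nR *: X1 - nR *: X2 + R *: 1%:M.
have hQ : adjmx Q = Q.
  rewrite /Q !adjmxD !adjmxN !adjmxZ hP /X1 /X2 !adjmx_tens hA hB !adjmx1.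
  by rewrite RR rmorphXn /nR !rmorph_nat.
have hAB : adjmx (A - B) = A - B by rewrite adjmxB hA hB.
have q0 := herm_trace_ge0 hQ.
have ab0 := herm_trace_ge0 hAB.
set a2 := \tr (A *m A); set b2 := \tr (B *m B); set t := \tr (A *m B).
have tPP : \tr (P *m P) = R by rewrite iP.
have tPX1 : \tr (P *m X1) = b2 by apply: trPB.
have tX1P : \tr (X1 *m P) = b2 by rewrite mxtrace_mulC.
have tPX2 : \tr (P *m X2) = a2 by apply: trPA.
have tX2P : \tr (X2 *m P) = a2 by rewrite mxtrace_mulC.
have tX1X1 : \tr (X1 *m X1) = b2 * nR by rewrite tensmx_mul trace_tens mulmx1 mxtrace1.
have tX2X2 : \tr (X2 *m X2) = nR * a2 by rewrite tensmx_mul trace_tens mulmx1 mxtrace1.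
have tX1X2 : \tr (X1 *m X2) = R * R by rewrite tensmx_mul trace_tens mulmx1 mul1mx trA trB.
have tX2X1 : \tr (X2 *m X1) = R * R by rewrite tensmx_mul trace_tens mulmx1 mul1mx trA trB mulrC.
have tX1 : \tr X1 = R * nR by rewrite trace_tens trB mxtrace1.
have tX2 : \tr X2 = nR * R by rewrite trace_tens trA mxtrace1.
have tI : \tr (1%:M : 'M[algC]_(n * n)) = nR * nR by rewrite mxtrace1 natrM.
have tBA : \tr (B *m A) = t by rewrite mxtrace_mulC.
have eQ : \tr (Q *m Q) = nR ^+ 2 * (nR ^+ 2 * R - nR * (a2 + b2) + R ^+ 2).
  rewrite expandQ.
  rewrite tPP tPX1 tX1P tPX2 tX2P tX1X1 tX2X2 tX1X2 tX2X1 tX1 tX2 tI.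
  rewrite -/R; ring.
have eAB : \tr ((A - B) *m (A - B)) = a2 + b2 - 2 * t.
  rewrite trsq tBA -/a2 -/b2 -/t; ring.
have nR0 : 0 < nR by rewrite ltr0n.
have : 0 <= \tr (Q *m Q) + nR ^+ 3 * \tr ((A - B) *m (A - B)).
  by rewrite addr_ge0 // mulr_ge0 // exprn_ge0 // ltW.
have -> : \tr (Q *m Q) + nR ^+ 3 * \tr ((A - B) *m (A - B)) =
   nR ^+ 2 * (nR ^+ 2 * R + R ^+ 2 - 2 * nR * t).
  by rewrite eQ eAB; ring.
by rewrite pmulr_rge0 // exprn_gt0.
Qed.

Lemma trace_pid m r : (r <= m)%N -> \tr (pid_mx r : 'M[algC]_m) = r%:R.
Proof.
move=> rm; rewrite /mxtrace.
transitivity (\sum_(i < m | (i < r)%N) (1 : algC)).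
  rewrite [RHS]big_mkcond /=; apply: eq_bigr => i _; rewrite mxE eqxx /=.
  by case: (i < r)%N.
by rewrite -(big_ord_widen m (fun _ => 1 : algC) rm) sumr_const card_ord.
Qed.

Lemma trace_idem m (A : 'M[algC]_m) : A *m A = A -> \tr A = (\rank A)%:R.
Proof.
move=> iA.
have eA := mulmx_ebase A.
set L := col_ebase A in eA *; set U := row_ebase A in eA *.
set D : 'M_m := pid_mx (\rank A) in eA *.
have uL : L \in unitmx by apply: col_ebase_unit.
have uU : U \in unitmx by apply: row_ebase_unit.
have rm : (\rank A <= m)%N by apply: rank_leq_row.
have DD : D *m D = D by apply: pid_mx_id.
have eD : D *m (U *m L) *m D = D.
  have : L *m (D *m (U *m L) *m D) *m U = L *m D *m U.
    transitivity ((L *m D *m U) *m (L *m D *m U)); first by rewrite !mulmxA.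
    by rewrite eA iA.
  move=> h; have := congr1 (fun X => invmx L *m X *m invmx U) h.
  by rewrite /= !mulmxA !mulVmx // mul1mx -!mulmxA !mulmxV // !mulmx1.
have -> : \tr A = \tr (L *m D *m U) by rewrite eA.
have e1 : \tr (L *m D *m U) = \tr (D *m U *m L) by rewrite -mulmxA mxtrace_mulC.
have e2 : \tr (D *m U *m L) = \tr (D *m (D *m U *m L)).
  by rewrite !mulmxA DD.
rewrite e1 e2 mxtrace_mulC -!mulmxA [U *m (L *m D)]mulmxA !mulmxA.
rewrite -(mulmxA D U L) eD trace_pid //.
Qed.

Lemma char_poly_conj m (V A : 'M[algC]_m) : V \in unitmx ->
  char_poly (invmx V *m A *m V) = char_poly A.
Proof.
move=> uV.
set mV' := map_mx (@polyC algC) (invmx V).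
set mV := map_mx (@polyC algC) V.
have h1 : mV' *m mV = 1%:M by rewrite -map_mxM mulVmx // map_mx1.
have e : char_poly_mx (invmx V *m A *m V) = mV' *m char_poly_mx A *m mV.
  rewrite /char_poly_mx !map_mxM -/mV' -/mV mulmxBr mulmxBl.
  by rewrite scalar_mxC -(mulmxA _ mV' mV) h1 mulmx1.
rewrite /char_poly e !det_mulmx mulrAC -det_mulmx h1 det1 mul1r.
by [].
Qed.

Lemma conj_mul m (V X Y : 'M[algC]_m) : V \in unitmx ->
  (invmx V *m X *m V) *m (invmx V *m Y *m V) = invmx V *m (X *m Y) *m V.
Proof.
move=> uV; rewrite !mulmxA -[invmx V *m X *m V *m invmx V]mulmxA mulmxV //.
by rewrite mulmx1.
Qed.

Lemma spec m (K : 'M[algC]_m) (mu : algC) :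
  adjmx K = K -> K *m K *m K = mu *: K ->
  exists s : seq algC,
    [/\ char_poly K = \prod_(x <- s) ('X - x%:P),
        all (fun x => x ^+ 3 == mu * x) s,
        \tr K = \sum_(x <- s) x &
        \tr (K *m K) = \sum_(x <- s) x ^+ 2].
Proof.
move=> hK k3.
have nK : K \is normalmx.
  apply/normalmxP.
  have -> : (K ^t* = K)%sesqui by rewrite -map_trmx; exact: hK.
  by [].
have eK := orthomx_spectralP nK.
set V := spectralmx K in eK; set d := spectral_diag K in eK.
have uV : V \in unitmx by apply: spectral_unit.
set D := diag_mx d in eK.
exists [seq d 0 i | i <- enum 'I_m]; split.
- rewrite eK char_poly_conj // char_poly_trig ?diag_mx_is_trig //.
  rewrite big_map big_enum /=; apply: eq_bigr => i _.
  by rewrite mxE eqxx mulr1n.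
- apply/allP => x /mapP [i _ ->].
  have : D *m D *m D = mu *: D.
    have := k3; rewrite eK !conj_mul // scalemxAl scalemxAr => h.
    have := congr1 (fun X => V *m X *m invmx V) h.
    by rewrite /= !mulmxA mulmxV // mul1mx !mulmxK // mul1mx.
  move/matrixP => /(_ i i); rewrite !mulmx_diag !mxE eqxx mulr1n => <-.
  by rewrite exprS expr2 mulrA.
- rewrite eK mxtrace_mulC mulmxA mulmxV // mul1mx mxtrace_diag.
  by rewrite big_map big_enum.
- rewrite eK conj_mul // mxtrace_mulC mulmxA mulmxV // mul1mx mulmx_diag.
  rewrite mxtrace_diag big_map big_enum /=; apply: eq_bigr => i _.
  by rewrite mxE expr2.
Qed.

Lemma cast_mul m m' (e : m = m') (A B : 'M[algC]_m) :
  castmx (e, e) A *m castmx (e, e) B = castmx (e, e) (A *m B).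
Proof. by case: m' / e; rewrite !castmx_id. Qed.

Lemma cube m (p1 p2 : 'M[algC]_m) : p1 *m p1 = p1 -> p2 *m p2 = p2 ->
  (p1 - p2) *m (p1 - p2) *m (p1 - p2) =
  (p1 - p2) - (p1 *m p2 *m p1 - p2 *m p1 *m p2).
Proof.
move=> i1 i2.
have e1 : (p1 - p2) *m ((p1 - p2) *m p1) = p1 - p1 *m p2 *m p1.
  rewrite [(p1 - p2) *m p1]mulmxBl i1 mulmxBr !mulmxBl i1 !mulmxA i2.
  by rewrite opprB addrA subrK.
have e2 : (p1 - p2) *m ((p1 - p2) *m p2) = p2 - p2 *m p1 *m p2.
  rewrite [(p1 - p2) *m p2]mulmxBl i2 mulmxBr !mulmxBl i2 !mulmxA i1.
  by rewrite opprB addrC addrA subrK.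
rewrite -mulmxA [(p1 - p2) *m (p1 - p2)]mulmxBr mulmxBr e1 e2.
by rewrite opprD opprK addrACA opprD opprK.
Qed.

Lemma sum_cnt (s : seq algC) (l : algC) : l != 0 ->
  all (fun x => x ^+ 3 == l ^+ 2 * x) s ->
  \sum_(x <- s) x = l * ((count_mem l s)%:R - (count_mem (- l) s)%:R) /\
  \sum_(x <- s) x ^+ 2 = l ^+ 2 * (count_mem l s + count_mem (- l) s)%:R.
Proof.
move=> l0; have lNl : (l == - l) = false.
  apply/negbTE; rewrite -addr_eq0 -mulr2n mulrn_eq0 negb_or l0 andbT //.
elim: s => [|x s IH] /=; first by rewrite !big_nil subrr mulr0 mulr0.
move/andP => [hx /IH [e1 e2]]; rewrite !big_cons e1 e2 !natrD.
have : x * ((x - l) * (x + l)) == 0.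
  have -> : x * ((x - l) * (x + l)) = x ^+ 3 - l ^+ 2 * x by ring.
  by rewrite subr_eq0.
rewrite !mulf_eq0 subr_eq0 addr_eq0 => /orP [/eqP -> | /orP [/eqP -> | /eqP ->]].
- rewrite (eq_sym 0 l) (negbTE l0) (eq_sym 0 (- l)) oppr_eq0 (negbTE l0) /=.
  split; ring.
- rewrite eqxx; case: eqP => [e|_]; first by move: lNl; rewrite -e eqxx.
  rewrite /=; split; ring.
- rewrite eqxx; case: eqP => [e|_]; first by move: lNl; rewrite {1}e eqxx.
  rewrite /=; split; ring.
Qed.

Lemma herm_idem_tr_ge0 m (H E : 'M[algC]_m) :
  adjmx H = H -> H *m H = H -> adjmx E = E -> E *m E = E ->
  0 <= \tr (H *m E).
Proof.
move=> hH iH hE iE.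
have -> : \tr (H *m E) = \tr ((E *m H) *m adjmx (E *m H)).
  rewrite adjmxM hH hE mulmxA -(mulmxA E H H) iH [RHS]mxtrace_mulC mulmxA iE.
  by rewrite mxtrace_mulC.
exact: trace_adj_ge0.
Qed.

Lemma trace_p1KK m (p1 p2 : 'M[algC]_m) : p1 *m p1 = p1 -> p2 *m p2 = p2 ->
  \tr (p1 *m ((p1 - p2) *m (p1 - p2))) = \tr p1 - \tr (p1 *m p2).
Proof.
move=> i1 i2.
rewrite mulmxA [p1 *m (p1 - p2)]mulmxBr i1 mulmxBl !mulmxBr i1.
rewrite -(mulmxA p1 p2 p2) i2.
have e : \tr (p1 *m p2 *m p1) = \tr (p1 *m p2).
  by rewrite mxtrace_mulC mulmxA i1.
rewrite !(mxtraceD, trN) e.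
by rewrite opprB addrA subrK.
Qed.

Lemma idem_compl m (p : 'M[algC]_m) : p *m p = p -> (1%:M - p) *m (1%:M - p) = 1%:M - p.
Proof.
move=> ip; rewrite mulmxBl mul1mx mulmxBr mulmx1 ip subrr subr0 //.
Qed.

Unset Implicit Arguments.

Theorem proposition2 (n : nat) (Q : algC) (P : 'M[algC]_(n * n)) :
  (2 <= n)%N -> Q \is Num.real -> 0 < Q ->
  adjmx P = P -> P *m P = P ->
  let P1 : 'M[algC]_(n * n * n) := P *t (1%:M : 'M[algC]_n) in
  let P2 : 'M[algC]_(n * n * n) := castmx (mulnA n n n, mulnA n n n)
             ((1%:M : 'M[algC]_n) *t P) in
  Q ^+ 2 *: (P1 *m P2 *m P1 - P2 *m P1 *m P2) = P1 - P2 ->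
  P != 0 -> P != (1%:M : 'M[algC]_n) *t (1%:M : 'M[algC]_n) ->
  let r := \rank P in
  let K := P1 - P2 in
  let lam := sqrtC (1 - Q ^- 2) in
  exists k : nat,
    [/\ eig_mult K lam = k, eig_mult K (- lam) = k,
        (r * (n ^ 2 - r) <= 2 * n * k)%N
      & (k <= minn (r * n) (n ^ 3 - r * n))%N].
Proof.
move=> n2 Qr Q0 hP iP P1 P2 heq Pn0 Pn1 r K lam.
have n0 : (0 < n)%N by apply: leq_trans n2.
set nR : algC := n%:R; set R : algC := r%:R.
have trP : \tr P = R by apply: trace_idem.
have hP1 : adjmx P1 = P1 by rewrite /P1 adjmx_tens hP adjmx1.
have hP2 : adjmx P2 = P2 by rewrite /P2 adjmx_cast adjmx_tens hP adjmx1.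
have iP1 : P1 *m P1 = P1 by rewrite /P1 tensmx_mul iP mulmx1.
have iP2 : P2 *m P2 = P2 by rewrite /P2 cast_mul tensmx_mul iP mulmx1.
have trP1 : \tr P1 = R * nR by rewrite /P1 trace_tens trP mxtrace1.
have trP2 : \tr P2 = R * nR by rewrite /P2 trace_cast trace_tens trP mxtrace1 mulrC.
set t := \tr (P1 *m P2).
have tE : t = \tr (Amat P *m Bmat P) by apply: trP1P2.
have key : 0 <= nR ^+ 2 * R + R ^+ 2 - 2 * nR * t.
  by rewrite tE -trP; apply: key_ineq.
have hK : adjmx K = K by rewrite /K adjmxB hP1 hP2.
have trK : \tr K = 0 by rewrite /K mxtraceD trN trP1 trP2 subrr.
have trKK : \tr (K *m K) = 2 * (R * nR - t).
  rewrite /K trsq iP1 iP2 trP1 trP2 -/t mxtrace_mulC -/t; ring.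
set mu := 1 - Q ^- 2.
have Q0' : Q != 0 by rewrite gt_eqF.
have Qi0 : 0 < Q ^- 2 by rewrite invr_gt0 exprn_gt0.
have mur : mu \is Num.real by rewrite /mu rpredB ?rpred1 // rpredV rpredX.
have mu1 : mu <= 1 by rewrite /mu lerBlDr lerDl ltW.
have k3 : K *m K *m K = mu *: K.
  rewrite /K cube // -/K.
  have -> : P1 *m P2 *m P1 - P2 *m P1 *m P2 = Q ^- 2 *: K.
    by rewrite /K -heq scalerA mulVf ?scale1r // expf_neq0.
  by rewrite /mu scalerBl scale1r.
have KK4 : (K *m K) *m (K *m K) = mu *: (K *m K).
  by rewrite mulmxA k3 -scalemxAl.
have hKK : adjmx (K *m K) = K *m K by rewrite adjmxM hK.
have trKK0 : 0 <= \tr (K *m K) by apply: herm_trace_ge0.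
have rle : (r <= n * n)%N by apply: rank_leq_row.
have [mu_pos|mu_npos] := boolP (0 < mu); last first.
  have mu0 : mu <= 0 by rewrite real_leNgt ?rpred0.
  have t4 : \tr ((K *m K) *m (K *m K)) = 0.
    apply/eqP; rewrite eq_le herm_trace_ge0 // andbT KK4 mxtraceZ.
    by rewrite mulr_le0_ge0.
  have KK0 : K *m K = 0 by apply: herm_trace_eq0.
  have et : t = R * nR.
    apply/eqP; rewrite -subr_eq0 -oppr_eq0 opprB.
    have : \tr (K *m K) == 0 by rewrite KK0 mxtrace0.
    by rewrite trKK mulf_eq0 pnatr_eq0 /=.
  have h : ((n ^ 2 * r)%:R : algC) <= (r ^ 2)%:R.
    rewrite natrM !natrX -/nR -/R -subr_ge0.
    have -> : R ^+ 2 - nR ^+ 2 * R = nR ^+ 2 * R + R ^+ 2 - 2 * nR * t.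
      by rewrite et; ring.
    exact: key.
  rewrite ler_nat in h.
  have : (r == 0)%N || (r == n * n)%N.
    case: (posnP r) => [->//|rpos]; apply/orP; right.
    rewrite eqn_leq rle /=.
    by rewrite -(leq_pmul2r rpos); move: h; rewrite !expnS expn0 !muln1.
  case/orP => /eqP hr.
    by move: Pn0; rewrite -mxrank_eq0 -/r hr.
  have uP : P \in unitmx by rewrite -row_free_unit /row_free -/r hr.
  have := congr1 (mulmx (invmx P)) iP; rewrite mulKmx // mulVmx // => eP.
  by move: Pn1; rewrite tens11 -eP eqxx.
have lam2 : lam ^+ 2 = mu by rewrite /lam sqrtCK.
have lam0 : lam != 0 by rewrite /lam sqrtC_eq0 gt_eqF.
have mu0 : mu != 0 by rewrite gt_eqF.
have [s [cp al tK tKK]] := spec hK k3.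
have al' : all (fun x => x ^+ 3 == lam ^+ 2 * x) s by rewrite lam2.
have [sc sc2] := sum_cnt lam0 al'.
set kp := count_mem lam s in sc sc2; set km := count_mem (- lam) s in sc sc2.
have ekm : km = kp.
  apply/eqP; rewrite -(eqr_nat algC) eq_sym -subr_eq0.
  by move: tK; rewrite sc trK => /esym/eqP; rewrite mulf_eq0 (negbTE lam0).
set k := kp.
have et : t = R * nR - mu * k%:R.
  have : 2 * (R * nR - t) = 2 * (mu * k%:R).
    by rewrite -trKK tKK sc2 ekm lam2 natrD; ring.
  have two0 : (2 : algC) != 0 by rewrite pnatr_eq0.
  move/(mulfI two0) => e.
  by rewrite -e; ring.
exists k; split.
- by rewrite /eig_mult cp mu_prod_XsubC.
- by rewrite /eig_mult cp mu_prod_XsubC -/km ekm.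
- have h1 : nR ^+ 2 * R <= R ^+ 2 + 2 * nR * (mu * k%:R).
    rewrite -subr_ge0.
    have -> : R ^+ 2 + 2 * nR * (mu * k%:R) - nR ^+ 2 * R =
              nR ^+ 2 * R + R ^+ 2 - 2 * nR * t by rewrite et; ring.
    exact: key.
  have h2 : 2 * nR * (mu * k%:R) <= 2 * nR * k%:R.
    by rewrite ler_wpM2l ?mulr_ge0 ?ler0n // ler_piMl ?ler0n // ltW.
  have h : nR ^+ 2 * R <= R ^+ 2 + 2 * nR * k%:R.
    by apply: (le_trans h1); rewrite lerD2l.
  have : ((n ^ 2 * r)%:R : algC) <= (r ^ 2 + 2 * n * k)%:R.
    by rewrite natrD !natrM -/nR -/R -!expr2.
  rewrite ler_nat => hn.
  by rewrite mulnBr leq_subLR mulnn [(r * n ^ 2)%N]mulnC.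
- set c := mu^-1.
  set E0 : 'M[algC]_(n * n * n) := 1%:M - c *: (K *m K).
  have cr : c^* = c by apply: conj_Creal; rewrite rpredV.
  have hE0 : adjmx E0 = E0 by rewrite /E0 adjmxB adjmx1 adjmxZ hKK cr.
  have cmu : c * mu = 1 by rewrite mulVf.
  have iE0 : E0 *m E0 = E0.
    rewrite /E0; move: (K *m K) KK4 => M MM.
    rewrite mulmxBl mul1mx mulmxBr mulmx1 -scalemxAl -scalemxAr MM.
    by rewrite !scalerA -mulrA cmu mulr1 subrr subr0.
  have hQ1 : adjmx (1%:M - P1) = 1%:M - P1 by rewrite adjmxB adjmx1 hP1.
  have g1 := herm_idem_tr_ge0 hP1 iP1 hE0 iE0.
  have g2 := herm_idem_tr_ge0 hQ1 (idem_compl iP1) hE0 iE0.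
  have tP1E0 : \tr (P1 *m E0) = R * nR - k%:R.
    rewrite /E0 mulmxBr mulmx1 -scalemxAr mxtraceD trN mxtraceZ /K trace_p1KK //.
    rewrite trP1 -/t et.
    have -> : R * nR - (R * nR - mu * k%:R) = mu * k%:R by ring.
    by rewrite mulrA cmu mul1r.
  have tE0 : \tr E0 = (n * n * n)%:R - 2 * k%:R.
    rewrite /E0 mxtraceD trN mxtraceZ trKK mxtrace1 et.
    have -> : 2 * (R * nR - (R * nR - mu * k%:R)) = mu * (2 * k%:R) by ring.
    by rewrite [c * _]mulrA cmu mul1r.
  have t2 : \tr ((1%:M - P1) *m E0) = (n * n * n)%:R - R * nR - k%:R.
    rewrite mulmxBl mul1mx mxtraceD trN tE0 tP1E0.
    by move: ((n * n * n)%:R) (R * nR) (k%:R) => a b d; ring.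
  rewrite tP1E0 subr_ge0 /R /nR -natrM ler_nat in g1.
  rewrite t2 -addrA -opprD subr_ge0 /R /nR -!natrM -natrD ler_nat in g2.
  have e3 : (n ^ 3 = n * n * n)%N by rewrite !expnS expn0 muln1 mulnA.
  rewrite leq_min g1 /= e3 leq_subRL //.
  by apply: leq_trans g2; rewrite leq_addr.
Qed.
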